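(* For each $x\in X$ we have $\deg(x)=\deg(T(x))$.
   Context: Paths and cycles: a graph is $G=(V,E)$ with $V$ finite and $E\subset V\times V$. A path is a finite sequence of vertices $(u_0,\dots,u_L)$ with $(u_j,u_{j+1})\in E$; its length is $|\cdot|=L$; a cycle is a path with $u_0=u_L$. For paths where one ends where the next starts, $+$ denotes concatenation and $a\,c$ means the cycle $c$ traversed $a$ times. Construction: $G_0=(V_0,E_0)$ with $V_0=\{v_{0,0}\}$, $E_0=\{e_{0,0}\}$, $e_{0,0}=(v_{0,0},v_{0,0})$. For $n\geq1$, $G_n=(V_n,E_n)$ consists of a vertex $v_{n,0}$, the loop $e_{n,0}=(v_{n,0},v_{n,0})$, and $n$ cycles $c_{n,1},\dots,c_{n,n}$, each starting and ending at $v_{n,0}$, whose vertices other than $v_{n,0}$ are pairwise distinct (within each cycle and across cycles); $V_n$ is the set of all these vertices and $E_n$ consists of $e_{n,0}$ and the edges of the cycles. The maps $\varphi_n\colon V_{n+1}\to V_n$ and the lengths of the cycles $c_{n+1,i}$ are defined together: $\varphi_n(v_{n+1,0})=v_{n,0}$, and for each $i$ a path $P_{n,i}$ in $G_n$ from $v_{n,0}$ to $v_{n,0}$ is given; $c_{n+1,i}$ has length $|P_{n,i}|$ and $\varphi_n$ maps its $j$-th vertex to the $j$-th vertex of $P_{n,i}$ (written $\varphi_n(c_{n+1,i})=P_{n,i}$). The paths are: $P_{0,1}=10\,e_{0,0}$; for $n\geq1$: $P_{n,i}=e_{n,0}+2c_{n,i}+2c_{n,i+1}+\dots+2c_{n,n}+e_{n,0}$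 for $2\leq i\leq n$; $P_{n,n+1}=(n+2)^2\big(\sum_{i=1}^n|c_{n,i}|\big)\,e_{n,0}$; and $P_{n,1}=(1\,e_{n,0}+2c_{n,1})+(2\,e_{n,0}+2c_{n,1})+\dots+(k_n\,e_{n,0}+2c_{n,1})+e_{n,0}+2c_{n,2}+\dots+2c_{n,n}+e_{n,0}$, where $k_n=2\big(1+\sum_{i=1}^n|c_{n,i}|\big)$. Let $X=\{x\in\prod_{n\geq0}V_n:\varphi_n(x_{n+1})=x_n\ \forall n\}$ with metric $d(x,y)=2^{-\min\{i:x_i\neq y_i\}}$ ($d(x,x)=0$); $X$ is a compact zero-dimensional metric space, and $T\colon X\to X$ defined by $T(x)=y$ iff $(x_n,y_n)\in E_n$ for all $n$ is a well-defined homeomorphism. Write $x_n$ for the $n$-th coordinate of $x$. Degree: for $v\in V_n$, $\deg(v)=+\infty$ if $v=v_{n,0}$ and $\deg(v)=i$ if $v$ is a vertex of $c_{n,i}$ different from $v_{n,0}$; for $x\in X$, $\deg(x)=\min_n\deg(x_n)$. *)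

(* Defs.v *)
From mathcomp Require Import all_boot.
From Stdlib Require Import ClassicalEpsilon.
Set Implicit Arguments. Unset Strict Implicit. Unset Printing Implicit Defensive.

(* Vertices of every G_n are encoded as pairs (i, j) : nat * nat.
   (0,0) is v_{n,0}; (i,j) with 1 <= i <= n and 1 <= j < |c_{n,i}| is the
   j-th vertex of the cycle c_{n,i} (the 0-th and last vertex being v_{n,0}). *)
Definition vtx := (nat * nat)%type.
Definition v0 : vtx := (0, 0).

(* A path is the sequence of its vertices (u_0, ..., u_L); its length is size - 1. *)
Definition plen (p : seq vtx) : nat := (size p).-1.

(* concatenation p + q (q starts where p ends) *)
Definition pcat (p q : seq vtx) : seq vtx := p ++ behead q.

(* a c : the cycle c traversed a times (0 times = the trivial path at its start) *)
Fixpoint prep (a : nat) (c : seq vtx) : seq vtx :=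
  match a with
  | 0 => [:: head v0 c]
  | a'.+1 => pcat c (prep a' c)
  end.

Definition eloop : seq vtx := [:: v0; v0].

Definition cycle_seq (i L : nat) : seq vtx :=
  v0 :: [seq (i, j) | j <- iota 1 L.-1] ++ [:: v0].

(* The paths P_{n,i} in G_n, given ls = [|c_{n,1}|; ...; |c_{n,n}|]. *)
Definition Pth (n : nat) (ls : seq nat) (i : nat) : seq vtx :=
  let cyc k := cycle_seq k (nth 0 ls k.-1) in
  let S := sumn ls in
  let twos k := foldr (fun m acc => pcat (prep 2 (cyc m)) acc) eloop
                      (iota k (n.+1 - k)) in
  let kn := 2 * (1 + S) in
  if n == 0 then prep 10 eloop
  else if i == 1 then
    pcat (foldr (fun a acc => pcat (pcat (prep a eloop) (prep 2 (cyc 1))) acc)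
                [:: v0] (iota 1 kn))
         (pcat eloop (twos 2))
  else if i == n.+1 then prep ((n + 2) ^ 2 * S) eloop
  else pcat eloop (twos i).

(* lens n = [|c_{n,1}|; ...; |c_{n,n}|], with |c_{n+1,i}| = |P_{n,i}| *)
Fixpoint lens (n : nat) : seq nat :=
  match n with
  | 0 => [::]
  | n'.+1 => [seq plen (Pth n' (lens n') i) | i <- iota 1 n'.+1]
  end.

Definition P (n i : nat) : seq vtx := Pth n (lens n) i.
Definition clen (n i : nat) : nat := nth 0 (lens n) i.-1.

Definition V (n : nat) : seq vtx :=
  v0 :: flatten [seq [seq (i, j) | j <- iota 1 (clen n i).-1] | i <- iota 1 n].

Definition E (n : nat) : seq (vtx * vtx) :=
  (v0, v0) :: flatten [seq zip (cycle_seq i (clen n i)) (behead (cycle_seq i (clen n i)))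
                      | i <- iota 1 n].

Definition edge (n : nat) (u v : vtx) : bool := (u, v) \in E n.

Definition phi (n : nat) (v : vtx) : vtx :=
  if v == v0 then v0 else nth v0 (P n v.1) v.2.

Definition inX (x : nat -> vtx) : Prop :=
  (forall n, x n \in V n) /\ (forall n, phi n (x n.+1) = x n).

(* degree of a vertex: None = +infinity *)
Definition degv (v : vtx) : option nat := if v == v0 then None else Some v.1.

Definition deg_is (x : nat -> vtx) (d : option nat) : Prop :=
  match d with
  | None => forall n, degv (x n) = None
  | Some k => (exists n, degv (x n) = Some k) /\
              (forall n m, degv (x n) = Some m -> k <= m)
  end.

Definition deg (x : nat -> vtx) : option nat :=
  epsilon (inhabits None) (deg_is x).

(* Main.v *)
Require Import Defs.
From mathcomp Require Import all_boot.
From mathcomp Require Import zify.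
From Stdlib Require Import ClassicalEpsilon Classical.

Definition E1 (s : seq vtx) := exists r, s = rcons r v0.
Definition E2 (s : seq vtx) := exists r, s = r ++ [:: v0; v0].
Definition H2 (s : seq vtx) := exists r, s = v0 :: v0 :: r.

Lemma pcatE1 p q : E1 p -> E1 q -> E1 (pcat p q).
Proof.
move=> Hp [r ->]; case: r => [|a r] /=; first by rewrite /pcat /= cats0.
by exists (p ++ r); rewrite /pcat /= rcons_cat.
Qed.

Lemma pcatE2 p q : E1 p -> E2 q -> E2 (pcat p q).
Proof.
move=> [p' ->] [r ->]; case: r => [|a r] /=.
  by exists p'; rewrite /pcat /= -cats1 -catA.
by exists (rcons p' v0 ++ r); rewrite /pcat /= catA.
Qed.

Lemma E2E1 s : E2 s -> E1 s.
Proof. by move=> [r ->]; exists (rcons r v0); rewrite -!cats1 -catA. Qed.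

Lemma pcatH2 p q : H2 p -> H2 (pcat p q).
Proof. by move=> [r ->]; exists (r ++ behead q). Qed.

Lemma prepE1 a c : E1 c -> head v0 c = v0 -> E1 (prep a c).
Proof.
move=> Hc Hh; elim: a => [|a IH] /=; first by rewrite Hh; exists [::].
exact: pcatE1.
Qed.

Lemma eloopE1 : E1 eloop. Proof. by exists [:: v0]. Qed.
Lemma eloopE2 : E2 eloop. Proof. by exists [::]. Qed.

Lemma cycE1 i L : E1 (cycle_seq i L).
Proof. by exists (v0 :: [seq (i, j) | j <- iota 1 L.-1]); rewrite /cycle_seq -cats1. Qed.

Lemma prepE1c a i L : E1 (prep a (cycle_seq i L)).
Proof. by apply: prepE1; [exact: cycE1|]. Qed.

Lemma prepE1e a : E1 (prep a eloop).
Proof. by apply: prepE1; [exact: eloopE1|]. Qed.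

Lemma prep_all a : all (fun v => v == v0) (prep a eloop).
Proof.
elim: a => [|a IH] //=.
by move: IH; case: (prep a eloop) => //= ? ? /andP[].
Qed.

Lemma foldrE2 (F : nat -> seq vtx) l b :
  (forall m, E1 (F m)) -> E2 b -> E2 (foldr (fun m acc => pcat (F m) acc) b l).
Proof. move=> HF Hb; elim: l => [|m l IH] //=; exact: pcatE2. Qed.

Lemma foldrE1 (F : nat -> seq vtx) l b :
  (forall m, E1 (F m)) -> E1 b -> E1 (foldr (fun m acc => pcat (F m) acc) b l).
Proof. move=> HF Hb; elim: l => [|m l IH] //=; exact: pcatE1. Qed.

Lemma Pshape n ls i :
  all (fun v => v == v0) (Pth n ls i) \/ (H2 (Pth n ls i) /\ E2 (Pth n ls i)).
Proof.
rewrite /Pth; case: eqP => [_|n0]; first by left; exact: prep_all.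
case: eqP => [_|i1].
  right; split.
    rewrite (_ : iota 1 (2 * (1 + sumn ls)) = 1 :: iota 2 (2 * (1 + sumn ls)).-1); last first.
      by rewrite mulnDr muln1.
    rewrite /=; repeat apply: pcatH2; by exists [::].
  apply: pcatE2.
    apply: (foldrE1 (fun a => pcat (prep a eloop) (prep 2 (cycle_seq 1 (nth 0 ls 0))))).
      by move=> m; apply: pcatE1; [exact: prepE1e| exact: prepE1c].
    by exists [::].
  apply: pcatE2; first exact: eloopE1.
  apply: (foldrE2 (fun m => prep 2 (cycle_seq m (nth 0 ls m.-1))));
    [move=> m; exact: prepE1c | exact: eloopE2].
case: eqP => [_|_]; first by left; exact: prep_all.
right; split; first by apply: pcatH2; exists [::].
apply: pcatE2; first exact: eloopE1.
apply: (foldrE2 (fun m => prep 2 (cycle_seq m (nth 0 ls m.-1))));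
  [move=> m; exact: prepE1c | exact: eloopE2].
Qed.

Lemma F2 n ls i t : t = 1 \/ t = (size (Pth n ls i)).-2 -> nth v0 (Pth n ls i) t = v0.
Proof.
case: (Pshape n ls i) => [Ha|[[r Hr] [r' Hr']]] Ht.
  have [lt|ge] := ltnP t (size (Pth n ls i)); last by rewrite nth_default.
  by move/allP: Ha => /(_ _ (mem_nth v0 lt)) /eqP.
case: Ht => ->; first by rewrite Hr.
rewrite Hr' nth_cat size_cat /= addn2 /= ltnn subnn //.
Qed.

Definition good (k : nat) (v : vtx) := (v == v0) || (k <= v.1).

Lemma all_behead (a : pred vtx) q : all a q -> all a (behead q).
Proof. by case: q => //= ? ? /andP[]. Qed.

Lemma pcat_all (a : pred vtx) p q : all a p -> all a q -> all a (pcat p q).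
Proof. by move=> Hp Hq; rewrite /pcat all_cat Hp all_behead. Qed.

Lemma prep_all2 k a c : all (good k) c -> all (good k) (prep a c).
Proof.
move=> Hc; elim: a => [|a IH] /=.
  by case: c Hc => //= ? ? /andP[-> _].
exact: pcat_all.
Qed.

Lemma cyc_good k m L : k <= m -> all (good k) (cycle_seq m L).
Proof.
move=> km; rewrite /cycle_seq /= all_cat /= andbT; apply/allP => v /mapP [j _ ->].
by rewrite /good /= km orbT.
Qed.

Lemma foldr_good k (F : nat -> seq vtx) l b :
  (forall m, m \in l -> all (good k) (F m)) -> all (good k) b ->
  all (good k) (foldr (fun m acc => pcat (F m) acc) b l).
Proof.
move=> HF Hb; elim: l HF => [|m l IH] HF //=.
apply: pcat_all; first by apply: HF; rewrite inE eqxx.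
by apply: IH => m' Hm'; apply: HF; rewrite inE Hm' orbT.
Qed.

Lemma eloop_good k : all (good k) eloop. Proof. by []. Qed.

Lemma prep_eloop_good k a : all (good k) (prep a eloop).
Proof. exact: prep_all2. Qed.

Lemma P_good n ls i : all (good i) (Pth n ls i).
Proof.
rewrite /Pth; case: eqP => [_|n0]; first exact: prep_eloop_good.
case: eqP => [->|i1].
  apply: pcat_all.
    apply: (foldr_good _ (fun a => pcat (prep a eloop) (prep 2 (cycle_seq 1 (nth 0 ls 0))))) => //.
    move=> m _; apply: pcat_all; first exact: prep_eloop_good.
    by apply: prep_all2; apply: cyc_good.
  apply: pcat_all => //.
  apply: (foldr_good _ (fun m => prep 2 (cycle_seq m (nth 0 ls m.-1)))) => // m.
  rewrite mem_iota => /andP[h _]; apply: prep_all2; apply: cyc_good; lia.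
case: eqP => [_|_]; first exact: prep_eloop_good.
apply: pcat_all => //.
apply: (foldr_good _ (fun m => prep 2 (cycle_seq m (nth 0 ls m.-1)))) => // m.
rewrite mem_iota => /andP[h _]; apply: prep_all2; apply: cyc_good; lia.
Qed.

Lemma down x k n : inX x -> good k (x n.+1) -> good k (x n).
Proof.
move=> [_ Hphi]; rewrite -(Hphi n) /phi /good.
case: eqP => [_|Hne] //= kle.
have Hg := P_good n (lens n) (x n.+1).1.
rewrite /P.
have [lt|ge] := ltnP (x n.+1).2 (size (Pth n (lens n) (x n.+1).1)); last by rewrite nth_default.
move/allP: Hg => /(_ _ (mem_nth v0 lt)); rewrite /good => /orP [->//|h].
by rewrite (leq_trans kle h) orbT.
Qed.

Lemma downm x k m n : inX x -> m <= n -> good k (x n) -> good k (x m).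
Proof.
move=> HX; elim: n => [|n IH]; first by rewrite leqn0 => /eqP ->.
rewrite leq_eqVlt => /orP [/eqP -> //|]; rewrite ltnS => mn Hg.
by apply: IH => //; apply: down.
Qed.

Lemma v0down x n : inX x -> x n.+1 = v0 -> x n = v0.
Proof. by move=> [_ Hphi] H; rewrite -(Hphi n) /phi H eqxx. Qed.

Lemma v0downm x m n : inX x -> m <= n -> x n = v0 -> x m = v0.
Proof.
move=> HX; elim: n => [|n IH]; first by rewrite leqn0 => /eqP ->.
rewrite leq_eqVlt => /orP [/eqP -> //|]; rewrite ltnS => mn Hg.
by apply: IH => //; apply: v0down.
Qed.

Definition cnth (i L t : nat) : vtx := if (0 < t) && (t < L) then (i, t) else v0.

Lemma nth_cyc i L t : nth v0 (cycle_seq i L) t = cnth i L t.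
Proof.
rewrite /cycle_seq /cnth; case: t => [|t] //=.
rewrite nth_cat size_map size_iota.
have -> : (t.+1 < L) = (t < L.-1) by case: L.
case: ifP => h; first by rewrite (nth_map 0) ?size_iota // nth_iota // add1n.
by case: (t - L.-1) => [|[]].
Qed.

Lemma zipP (s : seq vtx) u v : (u, v) \in zip s (behead s) ->
  exists t, u = nth v0 s t /\ v = nth v0 s t.+1.
Proof.
elim: s => [|a s IH] //=.
case: s IH => [|b s] IH //=.
rewrite inE => /orP [/eqP [-> ->]|h]; first by exists 0.
by case: (IH h) => t [-> ->]; exists t.+1.
Qed.

Lemma edgeP n u v : edge n u v ->
  (u = v0 /\ v = v0) \/
  exists i t, [/\ 1 <= i <= n, u = cnth i (clen n i) t & v = cnth i (clen n i) t.+1].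
Proof.
rewrite /edge /E inE => /orP [/eqP [-> ->]|]; first by left.
move/flatten_mapP => [i]; rewrite mem_iota => /andP [h1 h2] /zipP [t [-> ->]].
right; exists i, t; rewrite !nth_cyc; split => //; apply/andP; split => //; lia.
Qed.

Lemma clenS p k : 1 <= k <= p.+1 -> clen p.+1 k = plen (P p k).
Proof.
move=> /andP [h1 h2]; rewrite /clen.
have -> : lens p.+1 = [seq plen (Pth p (lens p) i) | i <- iota 1 p.+1] by [].
rewrite (nth_map 0) ?size_iota; last by lia.
by rewrite nth_iota; [rewrite /P; congr plen; congr Pth; lia | lia].
Qed.

Lemma degvS v k : degv v = Some k <-> v <> v0 /\ v.1 = k.
Proof.
rewrite /degv; case: eqP => h; split => //; first by case.
by case => ->.
by case => _ ->.
Qed.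

Lemma deg_uniq x d1 d2 : deg_is x d1 -> deg_is x d2 -> d1 = d2.
Proof.
case: d1 => [k1|]; case: d2 => [k2|] //=.
- move=> [[n1 H1] A1] [[n2 H2] A2].
  have := A1 _ _ H2; have := A2 _ _ H1 => a b; congr Some; by apply/eqP; rewrite eqn_leq a b.
- by move=> [[n1 H1] _] H; rewrite H in H1.
- by move=> H [[n1 H1] _]; rewrite H in H1.
Qed.

Lemma deg_ex x : exists d, deg_is x d.
Proof.
case: (classic (forall n, degv (x n) = None)) => H; first by exists None.
have [n Hn] := not_all_ex_not _ _ H.
case E: (degv (x n)) Hn => [m|] // _.
elim/ltn_ind: m n E => m IH n E.
case: (classic (exists n' m', m' < m /\ degv (x n') = Some m')).
  by move=> [n' [m' [lt E']]]; exact: (IH m' lt n' E').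
move=> Hno; exists (Some m); split; first by exists n.
move=> n' m' E'; rewrite leqNgt; apply/negP => lt; apply: Hno; by exists n', m'.
Qed.

Lemma deg_eq x d : deg_is x d -> deg x = d.
Proof.
move=> H; apply: (@deg_uniq x) => //.
exact: (epsilon_spec (inhabits None) (deg_is x) (deg_ex x)).
Qed.

Lemma degSomeP x k : deg_is x (Some k) <->
  (exists n, x n <> v0 /\ (x n).1 = k) /\ (forall n, good k (x n)).
Proof.
split.
  move=> [[n /degvS Hn] A]; split; first by exists n.
  move=> n'; rewrite /good; case: eqP => //= h.
  by apply: (A n'); apply/degvS.
move=> [[n Hn] A]; split; first by exists n; apply/degvS.
move=> n' m' /degvS [h <-]; move: (A n'); rewrite /good; case: eqP.
  by [].
by [].
Qed.

Arguments edgeP {n u v}. Arguments downm {x k m n}. Arguments down {x k n}. Arguments v0down {x n}. Arguments v0downm {x m n}.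
Lemma cnth_nz i L t : cnth i L t <> v0 -> [/\ 0 < t, t < L & cnth i L t = (i, t)].
Proof. by rewrite /cnth; case: ifP => // /andP [a b]. Qed.

Lemma nz_up {x n m} : inX x -> n <= m -> x n <> v0 -> x m <> v0.
Proof. by move=> HX nm H H'; apply: H; apply: (v0downm HX nm H'). Qed.

Lemma stable {x k n0 m} : inX x -> (forall n, good k (x n)) -> x n0 <> v0 -> (x n0).1 = k ->
  n0 <= m -> x m <> v0 /\ (x m).1 = k.
Proof.
move=> HX A H1 H2 nm; have Hm := nz_up HX nm H1; split => //.
apply/eqP; rewrite eqn_leq; apply/andP; split.
  have G : good (x m).1 (x n0) by apply: (downm HX nm); rewrite /good leqnn orbT.
  by move: G; rewrite /good; case: eqP => //= _; rewrite H2.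
by move: (A m); rewrite /good; case: eqP.
Qed.

Lemma up_good {x k n0} : inX x -> (forall m, n0 <= m -> good k (x m)) -> forall n, good k (x n).
Proof.
move=> HX A n; apply: (downm HX (leq_maxl n n0)); apply: A; exact: leq_maxr.
Qed.

Lemma Kfw x y k : inX x -> inX y -> (forall n, edge n (x n) (y n)) ->
  deg_is x (Some k) -> deg_is y (Some k).
Proof.
move=> HX HY He /degSomeP [[n0 [H1 H2]] A].
have key : forall m, n0 < m -> y m <> v0 /\ (y m).1 = k.
  move=> m lt; case: m lt => [//|p] lt; have [Hxm Hxk] := stable HX A H1 H2 (ltnW lt).
  case: (edgeP (He p.+1)) => [[hx _]//|[i [t [hi hu hv]]]].
  have hnz : cnth i (clen p.+1 i) t <> v0 by rewrite -hu.
  have [t0 tL hc] := cnth_nz _ _ _ hnz.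
  rewrite hc in hu.
  have ik : i = k by rewrite -Hxk hu.
  subst i.
  move: hv; rewrite /cnth; case: ifP => [_ -> //|/negP hn hv].
  exfalso.
  have tL' : t.+1 = clen p.+1 k by apply/eqP; rewrite eqn_leq tL /= leqNgt; apply/negP => h; apply: hn; rewrite h.
  rewrite clenS // /plen in tL'.
  have : x p = v0.
    case: HX => _ Hphi; rewrite -(Hphi p) /phi hu /=.
    have -> : ((k, t) == v0) = false by apply/eqP; case => _ ht; move: t0; rewrite ht.
    by rewrite /P; apply: F2; right; rewrite /P in tL'; lia.
  exact: (nz_up HX (_ : n0 <= p) H1).
apply/degSomeP; split; first by exists n0.+1; apply: key.
apply: (up_good HY (n0 := n0.+1)) => m lt.
by rewrite /good; have [_ ->] := key m lt; rewrite leqnn orbT.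
Qed.

Lemma Kbw x y k : inX x -> inX y -> (forall n, edge n (x n) (y n)) ->
  deg_is y (Some k) -> deg_is x (Some k).
Proof.
move=> HX HY He /degSomeP [[n0 [H1 H2]] A].
have key : forall m, n0 < m -> x m <> v0 /\ (x m).1 = k.
  move=> m lt; case: m lt => [//|p] lt; have [Hym Hyk] := stable HY A H1 H2 (ltnW lt).
  case: (edgeP (He p.+1)) => [[_ hy]//|[i [t [hi hu hv]]]].
  have hnz : cnth i (clen p.+1 i) t.+1 <> v0 by rewrite -hv.
  have [t0 tL hc] := cnth_nz _ _ _ hnz.
  rewrite hc in hv.
  have ik : i = k by rewrite -Hyk hv.
  subst i.
  move: hu; rewrite /cnth; case: ifP => [/andP [ht _] -> |/negP hn hu].
    by split => //; case => _ h; move: ht; rewrite h.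
  exfalso.
  have t00 : t = 0 by apply/eqP; rewrite -leqn0 leqNgt; apply/negP => h; apply: hn; rewrite h /=; lia.
  subst t.
  have : y p = v0.
    case: HY => _ Hphi; rewrite -(Hphi p) /phi hv.
    have -> : ((k, 1) == v0) = false by rewrite /v0 xpair_eqE andbF.
    by rewrite /P; apply: F2; left.
  exact: (nz_up HY (_ : n0 <= p) H1).
apply/degSomeP; split; first by exists n0.+1; apply: key.
apply: (up_good HX (n0 := n0.+1)) => m lt.
by rewrite /good; have [_ ->] := key m lt; rewrite leqnn orbT.
Qed.

Theorem lemma3p8 (x y : nat -> vtx) :
  inX x -> inX y -> (forall n, edge n (x n) (y n)) -> deg x = deg y.
Proof.
move=> HX HY He.
have Hx := epsilon_spec (inhabits None) (deg_is x) (deg_ex x).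
have Hy := epsilon_spec (inhabits None) (deg_is y) (deg_ex y).
rewrite /deg; move: Hx Hy.
case: (epsilon _ (deg_is x)) => [k|] Hx; first by move=> _; symmetry; apply: deg_eq; exact: (Kfw _ _ _ HX HY He Hx).
case: (epsilon _ (deg_is y)) => [k|] Hy //.
by have := deg_uniq _ _ _ Hx (Kbw _ _ _ HX HY He Hy).
Qed.
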